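(* Let $\alpha$ be a quasiorder on a set $A$. The following are equivalent: (1) $\alpha$ is a half-space on $A$; (2) for every three-element subset $B\subseteq A$, the restriction $\alpha\cap(B\times B)$ is a half-space on $B$; (3) for all $x,y,z\in A$: if $(x,y)\notin\alpha$, $(y,x)\notin\alpha$, $(x,z)\in\alpha$ and $z\neq x$, then $(y,z)\in\alpha$; (4) for all $x,y,z\in A$: if $(z,y)\notin\alpha$, $(y,z)\notin\alpha$, $(x,z)\in\alpha$ and $x\neq z$, then $(x,y)\in\alpha$.
   Context: A quasiorder on a set $A$ is a reflexive and transitive relation on $A$; $\Delta_A=\{(a,a)\mid a\in A\}$. A quasiorder $\alpha$ on $A$ is a half-space on $A$ if there exists a quasiorder $\beta$ on $A$ with $\alpha\cup\beta=A\times A$ and $\alpha\cap\beta=\Delta_A$ (equivalently, $\Delta_A\cup((A\times A)\setminus\alpha)$ is transitive). *)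

(* Defs.v *)
Set Implicit Arguments.

Definition quasiorder (T : Type) (r : T -> T -> Prop) : Prop :=
  (forall a, r a a) /\ (forall a b c, r a b -> r b c -> r a c).

Definition half_space (T : Type) (alpha : T -> T -> Prop) : Prop :=
  quasiorder alpha /\
  exists beta : T -> T -> Prop,
    quasiorder beta /\
    (forall x y, alpha x y \/ beta x y) /\
    (forall x y, (alpha x y /\ beta x y) <-> x = y).

Definition triple (A : Type) (a b c : A) : Type :=
  { x : A | x = a \/ x = b \/ x = c }.

Definition restrict3 {A : Type} (alpha : A -> A -> Prop) (a b c : A)
  : triple a b c -> triple a b c -> Prop :=
  fun u v => alpha (proj1_sig u) (proj1_sig v).
Arguments restrict3 {A} alpha a b c _ _.

(* Main.v *)
Require Import Defs.
From Stdlib Require Import Classical.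

Lemma hs_iff (T : Type) (r : T -> T -> Prop) : quasiorder r ->
  (half_space r <-> (forall x y z, ~ r x y -> ~ r y z -> r x z -> x <> z -> False)).
Proof.
  intros [Hre Htr]. split.
  - intros [_ [beta [[_ Hbt] [Hu Hi]]]] x y z Hxy Hyz Hxz Hne.
    assert (bxy : beta x y) by (destruct (Hu x y); tauto).
    assert (byz : beta y z) by (destruct (Hu y z); tauto).
    apply Hne. apply Hi. split; [exact Hxz | exact (Hbt _ _ _ bxy byz)].
  - intros H. split; [split; assumption|].
    exists (fun x y => x = y \/ ~ r x y). split; [split|split].
    + intros; left; reflexivity.
    + intros a b c [->|Hab] [->|Hbc]; auto.
      destruct (classic (a = c)) as [e|ne]; [left; exact e|right].
      intro Hac. exact (H a b c Hab Hbc Hac ne).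
    + intros x y. destruct (classic (r x y)); auto.
    + intros x y; split.
      * intros [Hr [e|n]]; [exact e|contradiction].
      * intros ->. split; [apply Hre | left; reflexivity].
Qed.

Lemma qo_restrict (A : Type) (alpha : A -> A -> Prop) (a b c : A) :
  quasiorder alpha -> quasiorder (restrict3 alpha a b c).
Proof.
  intros [Hre Htr]; split; unfold restrict3.
  - intros; apply Hre.
  - intros x y z; apply Htr.
Qed.

Theorem proposition2p2 (A : Type) (alpha : A -> A -> Prop)
  (Halpha : quasiorder alpha) :
  (half_space alpha <->
     (forall a b c : A, a <> b -> a <> c -> b <> c ->
        half_space (restrict3 alpha a b c))) /\
  (half_space alpha <->
     (forall x y z : A, ~ alpha x y -> ~ alpha y x -> alpha x z -> z <> x ->
        alpha y z)) /\
  (half_space alpha <->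
     (forall x y z : A, ~ alpha z y -> ~ alpha y z -> alpha x z -> x <> z ->
        alpha x y)).
Proof.
  pose proof Halpha as [Hre Htr].
  rewrite (hs_iff _ _ Halpha).
  split; [|split].
  - split.
    + intros H a b c _ _ _. apply (proj2 (hs_iff _ _ (qo_restrict _ _ a b c Halpha))).
      intros [x px] [y py] [z pz]. unfold restrict3; simpl. intros H1 H2 H3 Hne.
      apply (H x y z H1 H2 H3). intros ->. apply Hne. f_equal.
      apply proof_irrelevance.
    + intros H x y z Hxy Hyz Hxz Hne.
      assert (nxy : x <> y) by (intros ->; apply Hxy, Hre).
      assert (nyz : y <> z) by (intros ->; apply Hyz, Hre).
      pose proof (proj1 (hs_iff _ _ (qo_restrict _ _ x y z Halpha)) (H x y z nxy Hne nyz)) as G.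
      apply (G (exist _ x (or_introl eq_refl))
               (exist _ y (or_intror (or_introl eq_refl)))
               (exist _ z (or_intror (or_intror eq_refl))) Hxy Hyz Hxz).
      intro E. apply Hne. exact (f_equal (@proj1_sig _ _) E).
  - split.
    + intros H x y z Hxy Hyx Hxz Hne.
      apply NNPP; intro Hyz. apply (H x y z Hxy Hyz Hxz). auto.
    + intros H x y z Hxy Hyz Hxz Hne.
      apply Hyz. apply (H x y z Hxy); auto.
      intro Hyx. apply Hyz. exact (Htr _ _ _ Hyx Hxz).
  - split.
    + intros H x y z Hzy Hyz Hxz Hne.
      apply NNPP; intro Hxy. exact (H x y z Hxy Hyz Hxz Hne).
    + intros H x y z Hxy Hyz Hxz Hne.
      apply Hxy. apply (H x y z); auto.
      intro Hzy. apply Hxy. exact (Htr _ _ _ Hxz Hzy).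
Qed.
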